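(* For every deterministic parity automaton $\mathcal{A}=(Q,Q_0,\delta,\mu)$ with $m$ colors over a finite alphabet $\Sigma$, every bound $n\in\mathbb{N}$ and every $m'$ with $0<m'<m$, there is a deterministic parity automaton $\mathcal{A}'$ with $m'$ colors and $(n\cdot|Q|+1)\cdot|Q|\cdot(m-m'+2)$ states such that $L(\mathcal{A}')\subseteq L(\mathcal{A})$ and $L_n(L(\mathcal{A}'))=L_n(L(\mathcal{A}))$.
   Context: A lasso of length $n$ is a pair $(u,v)$ with $u\in\Sigma^*$, $v\in\Sigma^+$, $|u\cdot v|=n$, inducing $u\cdot v^\omega$. For $\psi\subseteq\Sigma^\omega$, $L_n(\psi)=\{u\cdot v^\omega \in \psi \mid u\in\Sigma^*, v\in\Sigma^+, |u\cdot v|=n\}$. A parity automaton is $(Q,Q_0,\delta,\mu)$ with finite $Q$, $Q_0\subseteq Q$, $\delta:Q\times\Sigma\to\mathcal{P}(Q)$, coloring $\mu$; ''with $m$ colors'' means $\mu:Q\to\{0,\dots,m-1\}$. A run on $\alpha_1\alpha_2\cdots$ is $q_0q_1\cdots$ with $q_0\in Q_0$ and $q_{i+1}\in\delta(q_i,\alpha_{i+1})$; it is accepting if the highest color occurring infinitely often along it is even; $L(\cdot)$ is the set of words with an accepting run. Deterministic means $|Q_0|=1$ and $|\delta(q,\alpha)|\le1$ for all $q,\alpha$ (missing successors allowed). *)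

(* Defs.v *)
From mathcomp Require Import all_boot.
Set Implicit Arguments.

(* Infinite words over Sigma: alpha_1 alpha_2 ... is represented by w : nat -> Sigma,
   with w i = alpha_(i+1). *)
Definition oword (Sigma : Type) := nat -> Sigma.

Record parity_aut (Sigma : finType) (m : nat) := ParityAut {
  pa_state :> finType;
  pa_init  : {set pa_state};
  pa_delta : pa_state -> Sigma -> {set pa_state};
  pa_color : pa_state -> 'I_m
}.
Arguments pa_init {Sigma m} p.
Arguments pa_delta {Sigma m} p _ _.
Arguments pa_color {Sigma m} p _.

(* Deterministic: |Q0| = 1 and |delta(q,a)| <= 1 (missing successors allowed). *)
Definition deterministic {Sigma : finType} (m : nat) (A : parity_aut Sigma m) : Prop :=
  #|pa_init A| = 1 /\ forall (q : pa_state A) (a : Sigma), #|pa_delta A q a| <= 1.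

Definition is_run {Sigma : finType} (m : nat) (A : parity_aut Sigma m)
  (w : oword Sigma) (r : nat -> pa_state A) : Prop :=
  r 0 \in pa_init A /\ forall i, r i.+1 \in pa_delta A (r i) (w i).

Definition accepting_run {Sigma : finType} (m : nat) (A : parity_aut Sigma m)
  (r : nat -> pa_state A) : Prop :=
  exists c : nat, ~~ odd c /\
    (forall N, exists i, N <= i /\ nat_of_ord (pa_color A (r i)) = c) /\
    (exists N, forall i, N <= i -> nat_of_ord (pa_color A (r i)) <= c).

Definition lang {Sigma : finType} (m : nat) (A : parity_aut Sigma m) (w : oword Sigma) : Prop :=
  exists r, is_run A w r /\ accepting_run A r.

Definition is_lasso_word {Sigma : finType} (u v : seq Sigma) (w : oword Sigma) : Prop :=
  forall i, w i = (if i < size u then nth (w i) u i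
                   else nth (w i) v ((i - size u) %% size v)).

Definition lasso_lang {Sigma : finType} (n : nat) (psi : oword Sigma -> Prop)
  (w : oword Sigma) : Prop :=
  psi w /\ exists (u v : seq Sigma),
    0 < size v /\ size (u ++ v) = n /\ is_lasso_word u v w.

(* Main.v *)
Require Import Defs.
From mathcomp Require Import all_boot.
From mathcomp Require Import zify.
From Stdlib Require Import Classical.
Set Implicit Arguments. Unset Strict Implicit. Unset Printing Implicit Defensive.

Definition limsup (f : nat -> nat) (c : nat) : Prop :=
  (forall N, exists i, N <= i /\ f i = c) /\ (exists N, forall i, N <= i -> f i <= c).

Lemma limsup_uniq f a b : limsup f a -> limsup f b -> a = b.
Proof.
move=> [Ia [Na Ea]] [Ib [Nb Eb]].
have [i [Hi Ei]] := Ia Nb. have [j [Hj Ej]] := Ib Na.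
have := Eb i Hi; have := Ea j Hj; lia.
Qed.

Lemma limsup_exists B f : (forall i, f i < B) -> exists c, limsup f c.
Proof.
elim: B f => [|B IH] f Hf; first by have := Hf 0.
case: (classic (forall N, exists i, N <= i /\ f i = B)) => H.
  by exists B; split => //; exists 0 => i _; have := Hf i.
have [N HN] := not_all_ex_not _ _ H.
have Hg : forall i, f (i + N) < B.
  move=> i; have := Hf (i + N); rewrite ltnS leq_eqVlt => /orP[/eqP E|//].
  by case: HN; exists (i + N); split => //; rewrite leq_addl.
have [c [Ic [Nc Ec]]] := IH _ Hg.
exists c; split.
  move=> N'; have [i [Hi E]] := Ic N'; exists (i + N); split => //; lia.
exists (Nc + N) => i Hi; have -> : i = (i - N) + N by lia.
apply: Ec; lia.
Qed.

Lemma high_limsup (c g : nat -> nat) s d : limsup c d -> s < d ->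
  (forall i, s < c i -> g i = c i - s) -> (forall i, c i <= s -> g i <= 1) ->
  limsup g (d - s).
Proof.
move=> [Ic [N Ec]] Hsd H1 H2; split.
  move=> N'; have [i [Hi E]] := Ic N'; exists i; split => //.
  by rewrite H1 E.
exists N => i Hi; case: (ltnP s (c i)) => Hci.
  rewrite H1 //; have := Ec i Hi; lia.
have := H2 i Hci; lia.
Qed.

Lemma det_eq (T : finType) (S : {set T}) x y : #|S| <= 1 -> x \in S -> y \in S -> x = y.
Proof. by move=> /card_le1_eqP H Hx Hy; apply: H. Qed.

Lemma det_pick (T : finType) (S : {set T}) y : #|S| <= 1 -> y \in S -> [pick z in S] = Some y.
Proof.
move=> Hc Hy; case: pickP => [z Hz|H]; first by congr Some; apply: det_eq Hc Hz Hy.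
by have := H y; rewrite Hy.
Qed.

Lemma argmax_ex (f : nat -> nat) a L : exists i, i <= L /\ forall j, j <= L -> f (a + j) <= f (a + i).
Proof.
elim: L => [|L [i [Hi H]]]; first by exists 0; split => // j; rewrite leqn0 => /eqP ->.
case: (leqP (f (a + L.+1)) (f (a + i))) => Hc.
  exists i; split; first lia.
  move=> j; rewrite leq_eqVlt => /orP[/eqP ->//|]; rewrite ltnS; exact: H.
exists L.+1; split => // j; rewrite leq_eqVlt => /orP[/eqP ->//|]; rewrite ltnS => Hj.
have := H j Hj; lia.
Qed.

Lemma per_mul (f : nat -> nat) B P : (forall i, B <= i -> f (i + P) = f i) ->
  forall l i, B <= i -> f (i + l * P) = f i.
Proof.
move=> Hp; elim=> [|l IH] i Hi; first by rewrite mul0n addn0.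
have -> : i + l.+1 * P = (i + l * P) + P by rewrite mulSn; lia.
rewrite Hp ?IH //; lia.
Qed.

Lemma per_window (f : nat -> nat) B P : 0 < P -> (forall i, B <= i -> f (i + P) = f i) ->
  forall i a, B <= i -> B <= a -> exists j, a <= j < a + P /\ f j = f i.
Proof.
move=> P0 Hp i a Hi Ha.
have [y yE] : exists y, y = i + a * P by eexists.
have Hy : f y = f i by rewrite yE; exact: (per_mul Hp a Hi).
have ya : a <= y by rewrite yE; nia.
have E := divn_eq (y - a) P.
have Hr := ltn_pmod (y - a) P0.
exists (a + (y - a) %% P); split; first lia.
rewrite -Hy.
have E2 : y = (a + (y - a) %% P) + (y - a) %/ P * P by lia.
rewrite [in RHS]E2 (per_mul Hp) //; lia.
Qed.

Lemma per_max (f : nat -> nat) B P : 0 < P -> (forall i, B <= i -> f (i + P) = f i) ->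
  exists M, (forall i, B <= i -> f i <= M) /\
    (forall a, B <= a -> exists j, a <= j < a + P /\ f j = M).
Proof.
move=> P0 Hp.
have [i0 [Hi0 Hmax]] := argmax_ex f B P.-1.
exists (f (B + i0)); split.
  move=> i Hi; have [j [Hj E]] := per_window P0 Hp Hi (leqnn B).
  rewrite -E; have -> : j = B + (j - B) by lia.
  apply: Hmax; lia.
move=> a Ha; exact: (per_window P0 Hp (leq_addr i0 B) Ha).
Qed.

Lemma per_limsup (f : nat -> nat) B P M : 0 < P -> (forall i, B <= i -> f i <= M) ->
    (forall a, B <= a -> exists j, a <= j < a + P /\ f j = M) -> limsup f M.
Proof.
move=> P0 H1 H2; split; last by exists B.
move=> N; have [j [Hj E]] := H2 (N + B) (leq_addl _ _).
exists j; split => //; lia.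
Qed.

Definition nextT (K t : nat) := if t == K then 0 else t.+1.
Definition lowc (s c : nat) := if c <= s then c else 0.
Definition nextX (K s t x c : nat) := if t == K then lowc s c else maxn x (lowc s c).
Definition oddblock (K h t x : nat) := [&& t == K, odd x & x <= h].
Definition colf (K h s m0 t c x : nat) :=
  if s < c then c - s else if (m0 != 0) && oddblock K h t x then 1 else 0.

Lemma tA (t : nat -> nat) K : (forall i, t i.+1 = nextT K (t i)) ->
  forall a, t a = 0 -> forall k, k <= K -> t (a + k) = k.
Proof.
move=> tS a Ha; elim=> [|k IH] Hk; first by rewrite addn0.
rewrite addnS tS IH; last lia.
rewrite /nextT; case: eqP => //; lia.
Qed.

Lemma tB (t : nat -> nat) K : t 0 = 0 -> (forall i, t i.+1 = nextT K (t i)) ->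
  forall j, t (j * K.+1) = 0.
Proof.
move=> t0 tS; elim=> [|j IH]; first by rewrite mul0n.
have -> : j.+1 * K.+1 = (j * K.+1 + K).+1 by rewrite mulSn; lia.
by rewrite tS (tA tS IH) // /nextT eqxx.
Qed.

Lemma xA (t x c : nat -> nat) K s : (forall i, t i.+1 = nextT K (t i)) ->
  (forall i, x i.+1 = nextX K s (t i) (x i) (c i.+1)) ->
  forall a, t a = K -> forall k, k <= K ->
  (exists l, l <= k /\ x (a.+1 + k) = lowc s (c (a.+1 + l))) /\
  (forall l, l <= k -> lowc s (c (a.+1 + l)) <= x (a.+1 + k)).
Proof.
move=> tS xS a Ha; elim=> [|k IH] Hk.
  rewrite addn0 xS Ha /nextX eqxx; split; first by exists 0; rewrite addn0.
  by move=> l; rewrite leqn0 => /eqP ->; rewrite addn0.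
have Ht : t (a.+1 + k) = k.
  apply: (tA tS); last lia.
  by rewrite tS Ha /nextT eqxx.
have [[l [Hl El]] Hall] := IH (ltnW Hk).
rewrite addnS xS Ht /nextX (_ : (k == K) = false); last by apply/eqP; lia.
rewrite -(addnS a.+1 k).
case: (leqP (lowc s (c (a.+1 + k.+1))) (x (a.+1 + k))) => Hc.
  split; first by exists l; split; [lia|exact El].
  move=> l'; rewrite leq_eqVlt => /orP[/eqP ->//|]; rewrite ltnS; exact: Hall.
split; first by exists k.+1.
move=> l'; rewrite leq_eqVlt => /orP[/eqP ->//|]; rewrite ltnS => Hl'.
apply: leq_trans (Hall _ Hl') (ltnW Hc).
Qed.

Lemma x0A (t x c : nat -> nat) K s h : t 0 = 0 -> (forall i, t i.+1 = nextT K (t i)) ->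
  (forall i, x i.+1 = nextX K s (t i) (x i) (c i.+1)) -> x 0 = h.+1 ->
  forall k, k <= K -> h.+1 <= x k.
Proof.
move=> t0 tS xS x0; elim=> [|k IH] Hk; first by rewrite x0.
rewrite xS (tA tS t0 (ltnW Hk)) /nextX (_ : (k == K) = false); last by apply/eqP; lia.
apply: leq_trans (IH (ltnW Hk)) (leq_maxl _ _).
Qed.

Lemma decomp K i : exists j k, k <= K /\ i = j * K.+1 + k.
Proof.
exists (i %/ K.+1), (i %% K.+1); split; last exact: divn_eq.
by rewrite -ltnS ltn_pmod.
Qed.

Lemma block_of (t : nat -> nat) K i : t 0 = 0 -> (forall i, t i.+1 = nextT K (t i)) ->
  K.+1 <= i -> exists a k, t a = K /\ k <= K /\ i = a.+1 + k /\ K <= a.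
Proof.
move=> t0 tS Hi; have [J [k [Hk E]]] := decomp K i.
case: J E => [|j] E; first lia.
exists (j * K.+1 + K), k; split; first by rewrite (tA tS (tB t0 tS j)).
split => //; split; first by rewrite E mulSn; lia.
lia.
Qed.

Lemma lowc_id s c : c <= s -> lowc s c = c.
Proof. by rewrite /lowc => ->. Qed.

Lemma lowc_le s c : lowc s c <= s.
Proof. by rewrite /lowc; case: ifP. Qed.

Lemma block_d (t x c : nat -> nat) K s d N0 : t 0 = 0 -> (forall i, t i.+1 = nextT K (t i)) ->
  (forall i, x i.+1 = nextX K s (t i) (x i) (c i.+1)) ->
  d <= s -> (forall i, N0 <= i -> c i <= d) -> (forall N, exists i, N <= i /\ c i = d) ->
  forall N, exists E, N <= E /\ t E = K /\ x E = d /\ c E <= d.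
Proof.
move=> t0 tS xS Hds HN0 Hinf N.
have [i [Hi Ci]] := Hinf (N + N0 + K.+1 + K.+1).
have Hi' : K.+1 <= i by lia.
have [a [k [Ha [Hk [Ei aK]]]]] := block_of t0 tS Hi'.
have [[l [Hl El]] Hall] := xA tS xS Ha (leqnn K).
exists (a.+1 + K); split; first lia.
split; first by apply: (tA tS) => //; rewrite tS Ha /nextT eqxx.
have Hc : forall l, l <= K -> c (a.+1 + l) <= d by move=> l' Hl'; apply: HN0; lia.
split; last by apply: Hc.
apply/eqP; rewrite eqn_leq; apply/andP; split.
  by rewrite El lowc_id ?Hc //; apply: leq_trans (Hc _ Hl) Hds.
by have := Hall k Hk; rewrite -Ei Ci lowc_id.
Qed.

Lemma lasso_shift (Sigma : finType) (u v : seq Sigma) w : 0 < size v -> is_lasso_word u v w ->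
  forall i, size u <= i -> w (i + size v) = w i.
Proof.
move=> Hv Hw i Hi.
have e1 := Hw i; have e2 := Hw (i + size v).
rewrite e2 e1.
rewrite (_ : (i + size v < size u) = false); last by apply/negbTE; rewrite -leqNgt; lia.
rewrite (_ : (i < size u) = false); last by apply/negbTE; rewrite -leqNgt.
rewrite (_ : i + size v - size u = (i - size u) + size v); last lia.
rewrite modnDr; apply: set_nth_default; exact: ltn_pmod.
Qed.

Lemma lasso_mul (Sigma : finType) (u v : seq Sigma) w : 0 < size v -> is_lasso_word u v w ->
  forall l i, size u <= i -> w (i + l * size v) = w i.
Proof.
move=> Hv Hw; elim=> [|l IH] i Hi; first by rewrite mul0n addn0.
have -> : i + l.+1 * size v = (i + l * size v) + size v by rewrite mulSn; lia.
rewrite (lasso_shift Hv Hw) ?IH //; lia.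
Qed.

Lemma run_shift (Sigma : finType) m (A : parity_aut Sigma m) w r : deterministic A -> is_run A w r ->
  forall i j, r i = r j -> (forall k, w (i + k) = w (j + k)) -> forall k, r (i + k) = r (j + k).
Proof.
move=> [_ Hd] [_ Hr] i j Eij Ew; elim=> [|k IH]; first by rewrite !addn0.
rewrite !addnS; apply: (det_eq (Hd (r (i + k)) (w (i + k)))); first exact: Hr.
by rewrite IH Ew; apply: Hr.
Qed.

Lemma lasso_periodic (Sigma : finType) m (A : parity_aut Sigma m) w r (u v : seq Sigma) :
  deterministic A -> is_run A w r -> 0 < size v -> is_lasso_word u v w ->
  exists P, 0 < P <= size (u ++ v) * #|pa_state A| /\
    forall i, size (u ++ v) * #|pa_state A| <= i -> r (i + P) = r i.
Proof.
move=> Hdet Hrun Hv Hw; rewrite size_cat.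
set a := size u; set p := size v; set Q := #|pa_state A|.
pose f (j : 'I_Q.+1) := r (a + j * p).
have ninj : ~ injective f.
  by move=> Hi; have := @leq_card _ _ f Hi; rewrite card_ord ltnn.
have [x Hx] := not_all_ex_not _ _ ninj.
have [y Hy] := not_all_ex_not _ _ Hx.
have [Exy Nxy] := imply_to_and _ _ Hy.
have key : forall x y : nat, x < y -> y <= Q -> r (a + x * p) = r (a + y * p) ->
    exists P, 0 < P <= (a + p) * Q /\ forall i, (a + p) * Q <= i -> r (i + P) = r i.
  move=> x' y' Hxy HyQ E.
  exists ((y' - x') * p); split; first by apply/andP; split; nia.
  move=> i Hi.
  have Hs := run_shift Hdet Hrun (esym E).
  have -> : i + (y' - x') * p = (a + y' * p) + (i - (a + x' * p)) by nia.
  rewrite Hs; first by congr r; nia.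
  move=> k; have -> : a + y' * p + k = (a + x' * p + k) + (y' - x') * p by nia.
  rewrite (lasso_mul Hv Hw) //; lia.
have := ltn_ord x; have := ltn_ord y; rewrite !ltnS => hy hx.
case: (ltngtP x y) => H.
- exact: key H hy Exy.
- exact: key H hx (esym Exy).
- by case: Nxy; apply: val_inj.
Qed.

Definition AT (Sigma : finType) m (A : parity_aut Sigma m) (K h : nat) : finType :=
  ('I_K.+1 * pa_state A * 'I_h.+2)%type.
Arguments AT {Sigma m} A K h.

Definition Adelta (Sigma : finType) m (A : parity_aut Sigma m) (K h s m0 : nat)
  (st : AT A K h) (a : Sigma) : {set AT A K h} :=
  match [pick q' in pa_delta A st.1.2 a] with
  | Some q' => if (m0 == 0) && oddblock K h st.1.1 st.2 then set0
      else [set ((inord (nextT K st.1.1), q'), inord (nextX K s st.1.1 st.2 (pa_color A q')))]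
  | None => set0
  end.
Arguments Adelta {Sigma m} A K h s m0 st a.

Definition Aprime (Sigma : finType) m (A : parity_aut Sigma m) (K h s m0 : nat) (q0 : pa_state A)
  : parity_aut Sigma m0.+1 :=
  @ParityAut Sigma m0.+1 (AT A K h) [set ((inord 0, q0), inord h.+1)] (Adelta A K h s m0)
    (fun st => inord (colf K h s m0 st.1.1 (pa_color A st.1.2) st.2)).

Arguments Aprime {Sigma m} A K h s m0 q0.

Lemma nextT_lt K t : t < K.+1 -> nextT K t < K.+1.
Proof. rewrite /nextT; case: eqP => //; lia. Qed.

Lemma nextX_lt K s h t x c : x < h.+2 -> s <= h.+1 -> nextX K s t x c < h.+2.
Proof.
move=> Hx Hs; have := lowc_le s c; rewrite /nextX; case: ifP => _; first lia.
rewrite gtn_max Hx /=; lia.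
Qed.

Lemma colf_lt K h s m0 t c x m : c < m -> m0.+1 < m -> h = m - m0.+1 -> h <= s ->
  colf K h s m0 t c x < m0.+1.
Proof.
move=> Hc Hm Hh Hs; rewrite /colf; case: ifP => _; first lia.
by case: ifP => // /andP[H _]; rewrite -lt0n in H.
Qed.

Lemma limsup_ext f g c : (forall i, f i = g i) -> limsup f c -> limsup g c.
Proof.
move=> E [I [N H]]; split.
  by move=> N'; have [i [Hi Ei]] := I N'; exists i; rewrite -E.
by exists N => i Hi; rewrite -E; apply: H.
Qed.

Lemma odd_le_h d h : odd d -> d <= h + odd h -> d <= h.
Proof.
move=> od; case oh: (odd h) => /= H; last by rewrite addn0 in H.
rewrite addn1 leq_eqVlt in H; case/orP: H => [/eqP E|]; last by rewrite ltnS.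
by rewrite E /= oh in od.
Qed.

Lemma s_even h : ~~ odd (h + odd h).
Proof. by rewrite oddD; case: (odd h). Qed.

Lemma sound (Sigma : finType) m (A : parity_aut Sigma m) K h s m0 q0 w :
  deterministic A -> pa_init A = [set q0] -> m0.+1 < m -> h = m - m0.+1 -> s = h + odd h ->
  lang (Aprime A K h s m0 q0) w -> lang A w.
Proof.
move=> Hdet Hinit Hm Hh Hs [r' [[Hr0 HrS] [c' [Hc' Hl']]]].
pose q i := (r' i).1.2. pose t i := nat_of_ord (r' i).1.1. pose x i := nat_of_ord (r' i).2.
have Hsh : s <= h.+1 by rewrite Hs; case: (odd h); lia.
have Hhs : h <= s by rewrite Hs; lia.
have step : forall i, [/\ q i.+1 \in pa_delta A (q i) (w i), t i.+1 = nextT K (t i),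
    x i.+1 = nextX K s (t i) (x i) (pa_color A (q i.+1)) &
    ~~ ((m0 == 0) && oddblock K h (t i) (x i))].
  move=> i; have := HrS i; rewrite /= /Adelta.
  case: pickP => [q' Hq'|_]; last by rewrite inE.
  case: ifP => Hk; first by rewrite inE.
  rewrite inE => /eqP E.
  rewrite /q /t /x E /= !inordK ?Hk //; first exact: nextX_lt.
  exact: nextT_lt.
have [q0E t0 x0] : [/\ q 0 = q0, t 0 = 0 & x 0 = h.+1].
  move: Hr0; rewrite /= inE => /eqP E; rewrite /q /t /x E /= !inordK //.
pose cA i := nat_of_ord (pa_color A (q i)).
have tS : forall i, t i.+1 = nextT K (t i) by move=> i; case: (step i).
have xS : forall i, x i.+1 = nextX K s (t i) (x i) (cA i.+1) by move=> i; case: (step i).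
have Hg : limsup (fun i => colf K h s m0 (t i) (cA i) (x i)) c'.
  apply: limsup_ext Hl' => i /=; rewrite inordK //.
  by apply: (colf_lt _ _ _ (ltn_ord _) Hm Hh Hhs).
exists q; split.
  split; first by rewrite q0E Hinit set11.
  by move=> i; case: (step i).
have [d Hd] := limsup_exists (fun i => ltn_ord (pa_color A (q i))).
exists d; split => //.
case: (ltnP s d) => Hsd.
  have E : c' = d - s.
    apply: limsup_uniq Hg _; apply: high_limsup Hd Hsd _ _.
    + by move=> i Hi; rewrite /colf Hi.
    + by move=> i Hi; rewrite /colf ltnNge Hi /=; case: ifP.
  move: Hc'; rewrite E oddB ?(ltnW Hsd) //.
  by rewrite Hs (negbTE (s_even h)) addbF.
apply/negP => Hodd.
have Hdh : d <= h by apply: odd_le_h Hodd _; rewrite -Hs.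
have [Ic [N0 HN0]] := Hd.
have blk := block_d t0 tS xS Hsd HN0 Ic.
case: (eqVneq m0 0) => Hm0.
  have [E [_ [tE [xE _]]]] := blk 0.
  case: (step E) => _ _ _; rewrite tE xE /oddblock Hm0 eqxx Hodd Hdh.
  by rewrite eqxx.
have H1 : limsup (fun i => colf K h s m0 (t i) (cA i) (x i)) 1.
  split.
    move=> N; have [E [HE [tE [xE cE]]]] := blk N; exists E; split => //.
    by rewrite /colf ltnNge (leq_trans cE Hsd) /= tE xE /oddblock Hm0 eqxx Hodd Hdh.
  exists N0 => i Hi; rewrite /colf ltnNge (leq_trans (HN0 i Hi) Hsd) /=; by case: ifP.
by have := limsup_uniq Hg H1 => E; rewrite E in Hc'.
Qed.

Fixpoint tt (K i : nat) : nat := if i is i'.+1 then nextT K (tt K i') else 0.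
Fixpoint xx (K s h : nat) (c : nat -> nat) (i : nat) : nat :=
  if i is i'.+1 then nextX K s (tt K i') (xx K s h c i') (c i) else h.+1.

Lemma tt_lt K i : tt K i < K.+1.
Proof. by elim: i => //= i IH; apply: nextT_lt. Qed.

Lemma xx_lt K s h c i : s <= h.+1 -> xx K s h c i < h.+2.
Proof. by move=> Hs; elim: i => //= i IH; apply: nextX_lt. Qed.

Lemma complete (Sigma : finType) m (A : parity_aut Sigma m) K h s m0 q0 w (u v : seq Sigma) :
  deterministic A -> pa_init A = [set q0] -> m0.+1 < m -> h = m - m0.+1 -> s = h + odd h ->
  K = size (u ++ v) * #|pa_state A| -> 0 < size v -> is_lasso_word u v w ->
  lang A w -> lang (Aprime A K h s m0 q0) w.
Proof.
move=> Hdet Hinit Hm Hh Hs HK Hv Hw [r [Hrun [c0 [Hc0 Hl0]]]].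
have Hsh : s <= h.+1 by rewrite Hs; case: (odd h); lia.
have Hhs : h <= s by rewrite Hs; lia.
pose cA i := nat_of_ord (pa_color A (r i)).
pose x := xx K s h cA.
pose r' i : AT A K h := ((inord (tt K i), r i), inord (x i)).
have [P [/andP[P0 PK] Hper]] := lasso_periodic Hdet Hrun Hv Hw.
rewrite -HK in PK Hper.
have Hperc : forall i, K <= i -> cA (i + P) = cA i by move=> i Hi; rewrite /cA Hper.
have [M [HM1 HM2]] := per_max P0 Hperc.
have HlM := per_limsup P0 HM1 HM2.
have Mev : ~~ odd M by rewrite (limsup_uniq HlM Hl0).
have t0 : tt K 0 = 0 by [].
have tS : forall i, tt K i.+1 = nextT K (tt K i) by [].
have xS : forall i, x i.+1 = nextX K s (tt K i) (x i) (cA i.+1) by [].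
have blockM : M <= s -> forall i, K.+1 <= i -> ~~ oddblock K h (tt K i) (x i).
  move=> Ms i Hi; rewrite /oddblock; case E: (tt K i == K) => //=.
  have [a [k [Ha [Hk [Ei aK]]]]] := block_of t0 tS Hi.
  have ta1 : tt K a.+1 = 0 by rewrite tS Ha /nextT eqxx.
  have Htk : tt K i = k by rewrite Ei (tA tS ta1 Hk).
  have kK : k = K by apply/eqP; rewrite -Htk.
  have [[l [Hl El]] Hall] := xA tS xS Ha (leqnn K).
  have [j [Hj Ej]] := HM2 a.+1 (leqW aK).
  have xM : x i = M.
    apply/eqP; rewrite eqn_leq; apply/andP; split.
      rewrite Ei kK El /lowc; case: ifP => // _; apply: HM1; lia.
    have l'K : j - a.+1 <= K by lia.
    have Ej' : a.+1 + (j - a.+1) = j by lia.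
    by have := Hall _ l'K; rewrite Ej' Ej lowc_id // Ei kK.
  by rewrite xM (negbTE Mev).
have nokill : forall i, ~~ ((m0 == 0) && oddblock K h (tt K i) (x i)).
  move=> i; case: (eqVneq m0 0) => //= Hm0.
  case: (leqP i K) => Hi.
    have := x0A t0 tS xS (_ : x 0 = h.+1) Hi => /(_ erefl) Hx.
    by rewrite /oddblock leqNgt Hx !andbF.
  apply: blockM Hi.
  have [j [_ Ej]] := HM2 K (leqnn K).
  have := ltn_ord (pa_color A (r j)); rewrite -/(cA j) Ej; lia.
exists r'; split.
  case: Hrun => Hr0 HrS; split.
    move: Hr0; rewrite Hinit inE => /eqP Hr0.
    by rewrite /r' /= inE Hr0.
  move=> i; rewrite /= /Adelta /= (det_pick (Hdet.2 (r i) (w i)) (HrS i)).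
  rewrite !inordK ?tt_lt ?xx_lt // (negbTE (nokill i)) inE.
  done.
pose g i := colf K h s m0 (tt K i) (cA i) (x i).
have Hg : forall i, g i = nat_of_ord (pa_color (Aprime A K h s m0 q0) (r' i)).
  move=> i; rewrite /= !inordK ?tt_lt ?xx_lt //.
  exact: (colf_lt _ _ _ (ltn_ord _) Hm Hh Hhs).
case: (ltnP s M) => HsM.
  exists (M - s); split.
    by rewrite oddB ?(ltnW HsM) // Hs (negbTE (s_even h)) addbF.
  apply: limsup_ext Hg _; apply: high_limsup HlM HsM _ _.
  + by move=> i Hi; rewrite /g /colf Hi.
  + by move=> i Hi; rewrite /g /colf ltnNge Hi /=; case: ifP.
exists 0; split => //.
apply: limsup_ext Hg _.
have g0 : forall i, K.+1 <= i -> g i = 0.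
  move=> i Hi; rewrite /g /colf ltnNge (leq_trans (HM1 i (ltnW Hi)) HsM) /=.
  by rewrite (negbTE (blockM HsM i Hi)) andbF.
split; last by exists K.+1 => i Hi; rewrite g0.
by move=> N; exists (N + K.+1); split; [lia | rewrite g0 //; lia].
Qed.

Theorem theorem6 (Sigma : finType) (m : nat) (A : parity_aut Sigma m)
  (n m' : nat) :
  deterministic A -> 0 < m' < m ->
  exists A' : parity_aut Sigma m',
    deterministic A' /\
    #|pa_state A'| = ((n * #|pa_state A| + 1) * #|pa_state A| * (m - m' + 2))%N /\
    (forall w, lang A' w -> lang A w) /\
    (forall w, lasso_lang n (lang A') w <-> lasso_lang n (lang A) w).
Proof.
move=> Hdet /andP[Hm0 Hm]; case: m' Hm0 Hm => [//|m0] _ Hm.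
have [q0 Hq0] : exists q0, pa_init A = [set q0] by apply/cards1P; rewrite Hdet.1.
exists (Aprime A (n * #|pa_state A|) (m - m0.+1) ((m - m0.+1) + odd (m - m0.+1)) m0 q0).
split.
  split; first by rewrite /= cards1.
  move=> st a; rewrite /= /Adelta; case: pickP => [q' _|_]; last by rewrite cards0.
  by case: ifP => _; rewrite ?cards0 ?cards1.
split; first by rewrite /= /AT !card_prod !card_ord addn1 addn2.
have Hsnd : forall w, lang (Aprime A (n * #|pa_state A|) (m - m0.+1) ((m - m0.+1) + odd (m - m0.+1)) m0 q0) w -> lang A w.
  by move=> w; apply: sound.
split => // w; split.
  by move=> [HL Hex]; split => //; apply: Hsnd.
move=> [HL [u [v [Hv [Hsz Hw]]]]]; split; last by exists u, v.
by apply: (complete (u := u) (v := v)) => //; rewrite Hsz.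
Qed.
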